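(* Let $G_R=(V,E_R)$ and $G_M=(V,E_M)$ be two strongly connected directed graphs on the same vertex set $V$, $|V|=n$, with weight matrices $W_R=[w^R_{ij}]$ and $W_M=[w^M_{ij}]$. Suppose that (1) $\sum_{j\neq i}w^R_{ji}=\sum_{j\ne i}w^M_{ji}=1$ for all $i\in V$ (i.e. $W_R$ and $W_M$ are doubly stochastic), and (2) for every pair of nodes $i,j\in V$: $w^R_{ij}+w^R_{ji}=w^M_{ij}+w^M_{ji}$. Then for every $r>0$ the two-graph Moran process with resident graph $G_R$ and mutant graph $G_M$ has the Moran fixation probability, i.e. $f_{G_R,G_M}(r)=f_{\mathrm{Moran}}(r)$.
   Context: Two-graph Moran process: the vertex set is $V=\{1,\dots,n\}$; there is a resident graph $G_R=(V,E_R)$ and a mutant graph $G_M=(V,E_M)$, each strongly connected, with weight matrices $W_R=[w^R_{ij}]$ and $W_M=[w^M_{ij}]$ that are row-stochastic ($\sum_j w^R_{ij}=\sum_j w^M_{ij}=1$ for every $i$), where $w^R_{ij}>0$ iff $(i,j)\in E_R$ and $w^M_{ij}>0$ iff $(i,j)\in E_M$. The state is the mutant set $S\subseteq V$. Residents have fitness $1$ and mutants fitness $r>0$. In each step a vertex $i$ is chosen with probability proportional to its fitness (total fitness $F(S)=r|S|+n-|S|$); if $i$ is a mutant it picks $j$ with probability $w^M_{ij}$ and $j$ becomes a mutant, and if $i$ is a resident it picks $j$ with probability $w^R_{ij}$ and $j$ becomes a resident. Absorption occurs at $S=\emptyset$ (extinction) or $S=V$ (fixation). With $f(S)$ the fixation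 probability from $S$, the fixation probability is $f_{G_R,G_M}(r)=\frac1n\sum_{u\in V}f(\{u\})$. The Moran fixation probability is $f_{\mathrm{Moran}}(r)=\frac{1-1/r}{1-1/r^n}$ for $r\neq1$ (and $1/n$ for $r=1$), the fixation probability when both graphs are the complete graph. *)

(* Defs.v *)
From HB Require Import structures.
From mathcomp Require Import all_boot all_order all_algebra.
From mathcomp Require Import all_classical all_reals all_analysis.
Set Implicit Arguments. Unset Strict Implicit. Unset Printing Implicit Defensive.
Import Order.TTheory GRing.Theory Num.Theory.
Import numFieldNormedType.Exports.
Local Open Scope ring_scope.

(* Vertex set V = 'I_n; a weighted digraph is a matrix W : 'M[R]_n,
   with edge set {(i,j) | 0 < W i j}. *)

Definition row_stochastic (R : realType) (n : nat) (W : 'M[R]_n) : Prop :=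
  (forall i j, 0 <= W i j) /\ (forall i, \sum_j W i j = 1).

Definition strongly_connected (R : realType) (n : nat) (W : 'M[R]_n) : Prop :=
  forall i j : 'I_n, connect [rel a b | 0 < W a b] i j.

Definition fitness (R : realType) (n : nat) (r : R) (S : {set 'I_n}) (i : 'I_n) : R :=
  if i \in S then r else 1.

Definition total_fitness (R : realType) (n : nat) (r : R) (S : {set 'I_n}) : R :=
  r * #|S|%:R + (n - #|S|)%:R.

Definition next_state (n : nat) (S : {set 'I_n}) (i j : 'I_n) : {set 'I_n} :=
  if i \in S then j |: S else S :\ j.

Definition trans_prob (R : realType) (n : nat) (WR WM : 'M[R]_n) (r : R)
    (S T : {set 'I_n}) : R :=
  \sum_i \sum_j
    (fitness r S i / total_fitness r S) *
    (if i \in S then WM i j else WR i j) *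
    (if next_state S i j == T then 1 else 0).

Fixpoint fix_by (R : realType) (n : nat) (WR WM : 'M[R]_n) (r : R) (k : nat)
    (S : {set 'I_n}) : R :=
  match k with
  | 0 => if S == [set: 'I_n]%SET then 1 else 0
  | k'.+1 => \sum_(T : {set 'I_n}) trans_prob WR WM r S T * fix_by WR WM r k' T
  end.

Definition fix_prob (R : realType) (n : nat) (WR WM : 'M[R]_n) (r : R)
    (S : {set 'I_n}) : R :=
  limn (fun k => fix_by WR WM r k S).

Definition fixation_probability (R : realType) (n : nat) (WR WM : 'M[R]_n) (r : R) : R :=
  n%:R^-1 * \sum_(u : 'I_n) fix_prob WR WM r [set u].

Definition moran_fixation (R : realType) (n : nat) (r : R) : R :=
  if r == 1 then n%:R^-1 else (1 - r^-1) / (1 - (r ^+ n)^-1).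

(* Main.v *)
Require Import Defs.
From HB Require Import structures.
From mathcomp Require Import all_boot all_order all_algebra.
From mathcomp Require Import all_classical all_reals all_analysis.
From mathcomp Require Import ring lra.
Import Order.TTheory GRing.Theory Num.Theory.
Import numFieldNormedType.Exports.
Local Open Scope ring_scope.
Set Implicit Arguments. Unset Strict Implicit. Unset Printing Implicit Defensive.

Lemma col_sum (R : realType) (n : nat) (W : 'M[R]_n) :
  row_stochastic W -> (forall i : 'I_n, \sum_(j | j != i) W j i = 1) ->
  forall i, \sum_j W j i = 1.
Proof.
move=> [Wge0 Wrow] Wcol.
have Hc : forall i, \sum_j W j i = W i i + 1.
  by move=> i; rewrite (bigD1 i) //= Wcol.
have Hd : \sum_i W i i = 0.
  have E : \sum_i (W i i + 1) = \sum_i \sum_j W i j.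
    rewrite exchange_big /=; apply: eq_bigr => i _; by rewrite Hc.
  rewrite big_split /= (eq_bigr (fun _ => 1) (fun i _ => Wrow i)) in E.
  by apply: (addIr (\sum_(i < n) (1:R))); rewrite add0r E.
move=> i; rewrite Hc.
have /psumr_eq0P H0 := Hd.
by rewrite H0 ?add0r // => k _; apply: Wge0.
Qed.

Lemma min_pos (R : realType) (T : finType) (P : pred T) (x : T -> R) :
  (forall t, P t -> 0 < x t) -> exists g : R, 0 < g /\ g <= 1 /\ forall t, P t -> g <= x t.
Proof.
move=> Hx; exists (\prod_(t | P t) Num.min 1 (x t)).
have H01 : forall t, P t -> 0 <= Num.min 1 (x t) <= 1.
  move=> t Pt; rewrite ge_min lexx orTb andbT le_min ler01 /=; exact: ltW (Hx t Pt).
split; first by apply: prodr_gt0 => t Pt; rewrite lt_min ltr01 Hx.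
split; first by apply: prodr_ile1 => t Pt; exact: H01.
move=> t Pt; rewrite (bigD1 t) //=.
apply: (@le_trans _ _ (Num.min 1 (x t))); last by rewrite ge_min lexx orbT.
rewrite -[leRHS]mulr1; apply: ler_wpM2l; first by case/andP: (H01 t Pt).
by apply: prodr_ile1 => s /andP[Ps _]; exact: H01.
Qed.
Lemma cross (T : finType) (e : rel T) (A : {set T}) x y :
  connect e x y -> x \in A -> y \notin A ->
  exists a b, [/\ a \in A, b \notin A & e a b].
Proof.
move=> /connectP [p]; elim: p x => [|z p IH] x /=.
  by move=> _ -> ->.
case/andP => exz pz ylast xA yA.
case zA: (z \in A); first exact: IH pz ylast zA yA.
by exists x, z; rewrite zA.
Qed.

Section Main.
Variables (R : realType) (n : nat) (WR WM : 'M[R]_n) (r : R).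
Hypothesis n_gt0 : (0 < n)%N.
Hypothesis r_gt0 : 0 < r.
Hypothesis WRge0 : forall i j, 0 <= WR i j.
Hypothesis WMge0 : forall i j, 0 <= WM i j.
Hypothesis WRrow : forall i, \sum_j WR i j = 1.
Hypothesis WMrow : forall i, \sum_j WM i j = 1.
Implicit Types (S T : {set 'I_n}) (f g : {set 'I_n} -> R).

Definition pp (S : {set 'I_n}) i j :=
  fitness r S i / total_fitness r S * (if i \in S then WM i j else WR i j).

Definition Ef (f : {set 'I_n} -> R) S :=
  \sum_i \sum_j pp S i j * f (next_state S i j).

Lemma F_gt0 S : 0 < total_fitness r S.
Proof.
rewrite /total_fitness.
have hS : (#|S| <= n)%N by have := max_card S; rewrite card_ord.
case: (posnP #|S|) => [->|Sp]; first by rewrite mulr0 add0r subn0 ltr0n.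
apply: (@lt_le_trans _ _ (r * #|S|%:R)); first by apply: mulr_gt0 => //; rewrite ltr0n.
by rewrite lerDl ler0n.
Qed.

Lemma fit_sum S : \sum_i fitness r S i = total_fitness r S.
Proof.
rewrite /total_fitness /fitness (bigID (fun i => i \in S)) /=.
rewrite (eq_bigr (fun _ => r)); last by move=> i ->.
rewrite [X in _ + X](eq_bigr (fun _ => 1)); last by move=> i /negbTE ->.
rewrite !sumr_const.
have E2 : #|(fun i : 'I_n => i \notin S)| = (n - #|S|)%N.
  have hS : (#|S| <= n)%N by have := max_card S; rewrite card_ord.
  have := cardC (mem S); rewrite card_ord => E.
  apply: (@addnI #|S|); rewrite subnKC // -[RHS]E; congr (_ + _)%N.
rewrite E2 mulr_natr; congr (_ + _).
Qed.

Lemma pp_ge0 S i j : 0 <= pp S i j.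
Proof.
rewrite /pp; apply: mulr_ge0; last by case: ifP.
apply: divr_ge0; last exact: ltW (F_gt0 S).
by rewrite /fitness; case: ifP => _; [exact: ltW|exact: ler01].
Qed.

Lemma pp_sum S : \sum_i \sum_j pp S i j = 1.
Proof.
rewrite (eq_bigr (fun i => fitness r S i / total_fitness r S)).
  by rewrite -mulr_suml fit_sum mulfV // gt_eqF // F_gt0.
move=> i _; transitivity (fitness r S i / total_fitness r S *
  \sum_j (if i \in S then WM i j else WR i j)); first by rewrite mulr_sumr.
have -> : \sum_j (if i \in S then WM i j else WR i j) = 1 by case: (i \in S).
by rewrite mulr1.
Qed.

Lemma EfE S f : \sum_T trans_prob WR WM r S T * f T = Ef f S.
Proof.
rewrite /trans_prob /Ef.
transitivity (\sum_T \sum_i \sum_j pp S i j *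
    (if next_state S i j == T then 1 else 0) * f T).
  apply: eq_bigr => T _; rewrite mulr_suml; apply: eq_bigr => i _.
  by rewrite mulr_suml.
rewrite exchange_big; apply: eq_bigr => i _.
rewrite exchange_big; apply: eq_bigr => j _.
rewrite (bigD1 (next_state S i j)) //= eqxx mulr1 big1 ?addr0 // => T /negbTE.
by rewrite eq_sym => ->; rewrite mulr0 mul0r.
Qed.

Lemma Ef_lin a f g S :
  Ef (fun T => a * f T + g T) S = a * Ef f S + Ef g S.
Proof.
rewrite /Ef mulr_sumr -big_split; apply: eq_bigr => i _.
rewrite mulr_sumr -big_split; apply: eq_bigr => j _.
by rewrite mulrDr mulrCA.
Qed.

Lemma Ef_scale a f S : Ef (fun T => a * f T) S = a * Ef f S.
Proof.
rewrite /Ef mulr_sumr; apply: eq_bigr => i _.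
rewrite mulr_sumr; apply: eq_bigr => j _; by rewrite mulrCA.
Qed.

Lemma Ef_cst c S : Ef (fun _ => c) S = c.
Proof.
rewrite /Ef (eq_bigr (fun i => (\sum_j pp S i j) * c)).
  by rewrite -mulr_suml pp_sum mul1r.
by move=> i _; rewrite mulr_suml.
Qed.

Lemma Ef_mono f g S : (forall T, f T <= g T) -> Ef f S <= Ef g S.
Proof.
move=> fg; apply: ler_sum => i _; apply: ler_sum => j _.
by apply: ler_wpM2l; [exact: pp_ge0|exact: fg].
Qed.

Lemma Ef_fix f S : (forall i j, next_state S i j = S) -> Ef f S = f S.
Proof.
move=> HS; rewrite -[RHS](Ef_cst (f S) S); apply: eq_bigr => i _.
by apply: eq_bigr => j _; rewrite HS.
Qed.

Lemma ns_set0 (i j : 'I_n) : next_state (finset.set0 : {set 'I_n}) i j = finset.set0.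
Proof. by rewrite /next_state inE; apply/setP => x; rewrite !inE andbF. Qed.

Lemma ns_setT (i j : 'I_n) : next_state [set: 'I_n] i j = [set: 'I_n].
Proof. by rewrite /next_state inE; apply/setP => x; rewrite !inE orbT. Qed.

Fixpoint iterE k (f : {set 'I_n} -> R) : {set 'I_n} -> R :=
  if k is k'.+1 then Ef (iterE k' f) else f.

Lemma iterE_add k f g S :
  iterE k (fun T => f T + g T) S = iterE k f S + iterE k g S.
Proof.
elim: k S => [//|k IH] S /=.
rewrite (funext IH) -[X in X + _]mul1r -Ef_lin.
by apply: eq_bigr => i _; apply: eq_bigr => j _; rewrite mul1r.
Qed.

Lemma iterE_scale k a f S :
  iterE k (fun T => a * f T) S = a * iterE k f S.
Proof. by elim: k S => [//|k IH] S /=; rewrite (funext IH) Ef_scale. Qed.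

Lemma iterE_mono k f g S : (forall T, f T <= g T) -> iterE k f S <= iterE k g S.
Proof.
move=> fg; elim: k S => [|k IH] S /=; first exact: fg.
exact: Ef_mono.
Qed.

Lemma iterE_fix k f S : (forall T, Ef f T = f T) -> iterE k f S = f S.
Proof.
move=> Hf; elim: k S => [//|k IH] S /=.
by rewrite (funext IH) Hf.
Qed.

Lemma fix_iter k S :
  fix_by WR WM r k S = iterE k (fun T => if T == [set: 'I_n] then 1 else 0) S.
Proof.
elim: k S => [//|k IH] S /=.
by rewrite -EfE; apply: eq_bigr => T _; rewrite IH.
Qed.

Hypothesis WRcol : forall i, \sum_j WR j i = 1.
Hypothesis WMcol : forall i, \sum_j WM j i = 1.
Hypothesis Hsym : forall i j, WR i j + WR j i = WM i j + WM j i.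
Hypothesis HSC : strongly_connected WM.

Definition cutw (W : 'M[R]_n) (A B : {set 'I_n}) :=
  \sum_i \sum_j (if (i \in A) && (j \in B) then W i j else 0).

Lemma cut_row (W : 'M[R]_n) A B : (forall i, \sum_j W i j = 1) ->
  cutw W A B + cutw W A (~: B) = #|A|%:R.
Proof.
move=> Wrow; rewrite /cutw -big_split /=.
transitivity (\sum_i (if i \in A then (1:R) else 0)).
  apply: eq_bigr => i _; rewrite -big_split /=.
  case: (i \in A) => /=.
    rewrite -(Wrow i); apply: eq_bigr => j _; rewrite inE.
    by case: (j \in B); rewrite ?addr0 ?add0r.
  by rewrite big1 // => j _; rewrite addr0.
by rewrite -big_mkcond sumr_const.
Qed.

Lemma cut_col (W : 'M[R]_n) A B : (forall i, \sum_j W j i = 1) ->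
  cutw W A B + cutw W (~: A) B = #|B|%:R.
Proof.
move=> Wcol; rewrite /cutw exchange_big [X in _ + X]exchange_big -big_split /=.
transitivity (\sum_j (if j \in B then (1:R) else 0)).
  apply: eq_bigr => j _; rewrite -big_split /=.
  case: (j \in B) => /=.
    rewrite -(Wcol j); apply: eq_bigr => i _; rewrite inE.
    by case: (i \in A); rewrite ?andbT ?addr0 ?add0r.
  by rewrite big1 // => i _; rewrite !andbF addr0.
by rewrite -big_mkcond sumr_const.
Qed.

Lemma cut_eq (W : 'M[R]_n) S : (forall i, \sum_j W i j = 1) ->
  (forall i, \sum_j W j i = 1) -> cutw W S (~: S) = cutw W (~: S) S.
Proof.
move=> Wr Wc; apply: (@addrI _ (cutw W S S)).
by rewrite cut_row // cut_col.
Qed.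

Lemma cut_sum (W : 'M[R]_n) S : cutw W S (~: S) + cutw W (~: S) S =
  \sum_i \sum_j (if (i \in S) && (j \notin S) then W i j + W j i else 0).
Proof.
rewrite {2}/cutw exchange_big /= /cutw -big_split; apply: eq_bigr => i _.
rewrite -big_split; apply: eq_bigr => j _ /=; rewrite !inE.
by case: (i \in S); case: (j \in S); rewrite /= ?addr0.
Qed.

Lemma cut_main S : cutw WM S (~: S) = cutw WR (~: S) S.
Proof.
have e1 := cut_eq S WMrow WMcol.
have e2 := cut_eq S WRrow WRcol.
have e3 : cutw WR S (~: S) + cutw WR (~: S) S = cutw WM S (~: S) + cutw WM (~: S) S.
  rewrite !cut_sum; apply: eq_bigr => i _; apply: eq_bigr => j _.
  by rewrite Hsym.
lra.
Qed.

Definition D := \sum_(0 <= m < n) r^-1 ^+ m.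
Definition hh k := (\sum_(0 <= m < k) r^-1 ^+ m) / D.
Definition H S := hh #|S|.

Lemma sum_pos a b : (a < b)%N -> 0 < \sum_(a <= m < b) r^-1 ^+ m.
Proof.
move=> ab; rewrite big_ltn //; apply: ltr_pwDl.
  by apply: exprn_gt0; rewrite invr_gt0.
by apply: sumr_ge0 => m _; apply: exprn_ge0; rewrite invr_ge0 ltW.
Qed.

Lemma D_gt0 : 0 < D.
Proof. exact: sum_pos. Qed.

Lemma hh_step k : hh k.+1 - hh k = r^-1 ^+ k / D.
Proof. by rewrite /hh big_nat_recr //= mulrDl addrAC subrr add0r. Qed.

Lemma hh_rel k : (0 < k)%N -> r * (hh k.+1 - hh k) = hh k - hh k.-1.
Proof.
case: k => [//|k] _; rewrite !hh_step exprS /= !mulrA mulfV ?mul1r //.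
by rewrite gt_eqF.
Qed.

Lemma hh0 : hh 0 = 0.
Proof. by rewrite /hh big_geq // mul0r. Qed.

Lemma hhn : hh n = 1.
Proof. by rewrite /hh -/D mulfV // gt_eqF // D_gt0. Qed.

Lemma hh_gt0 k : (0 < k)%N -> 0 < hh k.
Proof. by move=> k0; apply: divr_gt0; [exact: sum_pos | exact: D_gt0]. Qed.

Lemma hh_lt1 k : (k < n)%N -> hh k < 1.
Proof.
move=> kn; rewrite /hh ltr_pdivrMr ?D_gt0 // mul1r /D.
rewrite (big_cat_nat (leq0n k) (ltnW kn)) /= ltrDl.
exact: sum_pos.
Qed.

Lemma hh_ge0 k : 0 <= hh k.
Proof.
apply: divr_ge0; last exact: ltW D_gt0.
by apply: sumr_ge0 => m _; apply: exprn_ge0; rewrite invr_ge0 ltW.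
Qed.

Lemma hh_le1 k : (k <= n)%N -> hh k <= 1.
Proof.
rewrite leq_eqVlt => /orP[/eqP -> | kn]; first by rewrite hhn.
exact: ltW (hh_lt1 kn).
Qed.

Lemma card_le S : (#|S| <= n)%N.
Proof. by have := max_card S; rewrite card_ord. Qed.

Lemma card_n S : #|S| = n -> S = [set: 'I_n].
Proof.
move=> Sn; apply/eqP; by rewrite eqEcard finset.subsetT cardsT card_ord Sn leqnn.
Qed.

Definition tr S := (0 < #|S|)%N && (#|S| < n)%N.

Definition Ht S := if tr S then H S else 0.

Lemma H_dec S : H S = (if S == [set: 'I_n] then 1 else 0) + Ht S.
Proof.
rewrite /Ht /tr; case: (posnP #|S|) => [S0|Sp] /=.
  have -> : S == [set: 'I_n] = false.
    apply/negbTE/negP => /eqP SE; move: S0; rewrite SE cardsT card_ord.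
    by move=> n0; move: n_gt0; rewrite n0.
  by rewrite /H S0 hh0 addr0.
case: ltnP => Sn.
  have -> : S == [set: 'I_n] = false.
    by apply/negbTE/negP => /eqP SE; move: Sn; rewrite SE cardsT card_ord ltnn.
  by rewrite add0r.
have Se : #|S| = n by apply/eqP; rewrite eqn_leq card_le Sn.
by rewrite (card_n Se) eqxx addr0 /H cardsT card_ord hhn.
Qed.

Lemma Ef_H S : Ef H S = H S.
Proof.
case: (posnP #|S|) => [S0|Sp].
  rewrite (cards0_eq S0); apply: Ef_fix => i j; exact: ns_set0.
apply/eqP; rewrite -subr_eq0; apply/eqP.
have -> : Ef H S - H S = Ef (fun T => 1 * H T + (- H S)) S.
  by rewrite Ef_lin Ef_cst mul1r.
set F := total_fitness r S.
transitivity (r / F * (hh #|S|.+1 - hh #|S|) * cutw WM S (~: S) +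
   1 / F * (hh #|S|.-1 - hh #|S|) * cutw WR (~: S) S).
  rewrite /Ef /cutw !mulr_sumr -big_split; apply: eq_bigr => i _.
  rewrite !mulr_sumr -big_split; apply: eq_bigr => j _.
  rewrite /pp /fitness /next_state /H !inE -/F.
  case Hi: (i \in S); case Hj: (j \in S) => /=.
  - have -> : j |: S = S by apply/setP => x; rewrite !inE; case: eqP => // ->.
    ring.
  - rewrite cardsU1 Hj /= add1n; ring.
  - have E : #|S :\ j| = #|S|.-1 by rewrite (cardsD1 j S) Hj add1n.
    rewrite E; ring.
  - have -> : S :\ j = S.
      by apply/setP => x; rewrite !inE; case: eqP => // ->; rewrite Hj.
    ring.
rewrite cut_main; have E := hh_rel Sp.
set c := cutw WR (~: S) S.
have -> : r / F * (hh #|S|.+1 - hh #|S|) * c = c / F * (r * (hh #|S|.+1 - hh #|S|)) by ring.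
rewrite E; ring.
Qed.

Definition xv S := Ef (fun T => (H T - H S) ^+ 2) S.

Lemma Ef_sq S : Ef (fun T => H T ^+ 2) S = H S ^+ 2 + xv S.
Proof.
rewrite /xv (_ : (fun T => (H T - H S) ^+ 2) =
   (fun T => 1 * (H T ^+ 2) + ((-2 * H S) * H T + H S ^+ 2))); last first.
  by apply: funext => T; ring.
rewrite Ef_lin Ef_lin Ef_cst Ef_H; ring.
Qed.

Lemma xv_ge0 S : 0 <= xv S.
Proof.
apply: sumr_ge0 => i _; apply: sumr_ge0 => j _.
by apply: mulr_ge0; [exact: pp_ge0 | exact: sqr_ge0].
Qed.

Lemma xv_gt0 S : tr S -> 0 < xv S.
Proof.
case/andP => S0 Sn.
have [i0 Si0] : exists i0, i0 \in S by apply/set0Pn; rewrite -card_gt0.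
have [j0 Sj0] : exists j0, j0 \notin S.
  case: (pickP (fun j => j \notin S)) => [j Hj | H0]; first by exists j.
  have SE : S = [set: 'I_n].
    by apply/setP => j; rewrite inE; move: (H0 j) => /= /negbFE.
  by move: Sn; rewrite SE cardsT card_ord ltnn.
have [a [b [aS bS ab]]] := cross (HSC i0 j0) Si0 Sj0.
rewrite /= in ab.
apply: (@lt_le_trans _ _ (\sum_j pp S a j * (H (next_state S a j) - H S) ^+ 2)).
  apply: (@lt_le_trans _ _ (pp S a b * (H (next_state S a b) - H S) ^+ 2)).
    apply: mulr_gt0.
      rewrite /pp /fitness aS; apply: mulr_gt0 => //.
      by apply: divr_gt0 => //; exact: F_gt0.
    rewrite /next_state aS /H cardsU1 bS add1n hh_step.
    apply: exprn_gt0; apply: divr_gt0; last exact: D_gt0.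
    by apply: exprn_gt0; rewrite invr_gt0.
  rewrite [leRHS](bigD1 b) //= lerDl; apply: sumr_ge0 => j _.
  by apply: mulr_ge0; [exact: pp_ge0 | exact: sqr_ge0].
rewrite /xv /Ef [leRHS](bigD1 a) //= lerDl; apply: sumr_ge0 => i _.
apply: sumr_ge0 => j _.
by apply: mulr_ge0; [exact: pp_ge0 | exact: sqr_ge0].
Qed.

Definition psi S := H S - H S ^+ 2.

Lemma Ef_psi S : Ef psi S = psi S - xv S.
Proof.
rewrite /psi (_ : (fun T => H T - H T ^+ 2) = (fun T => (-1) * (H T ^+ 2) + H T)); last first.
  by apply: funext => T; ring.
rewrite Ef_lin Ef_sq Ef_H; ring.
Qed.

Lemma H_ge0 S : 0 <= H S.
Proof. exact: hh_ge0. Qed.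

Lemma H_le1 S : H S <= 1.
Proof. exact: hh_le1 (card_le S). Qed.

Lemma psi_ge0 S : 0 <= psi S.
Proof.
rewrite /psi (_ : H S - H S ^+ 2 = H S * (1 - H S)); last by ring.
by apply: mulr_ge0; [exact: H_ge0 | rewrite subr_ge0 H_le1].
Qed.

Lemma psi_le1 S : psi S <= 1.
Proof. have := sqr_ge0 (H S); have := H_le1 S; rewrite /psi; lra. Qed.

Lemma psi_gt0 S : tr S -> 0 < psi S.
Proof.
case/andP => S0 Sn.
rewrite /psi (_ : H S - H S ^+ 2 = H S * (1 - H S)); last by ring.
by apply: mulr_gt0; [exact: hh_gt0 | rewrite subr_gt0; exact: hh_lt1].
Qed.

Lemma psi_ntr S : ~~ tr S -> psi S = 0.
Proof.
move=> /negbTE trS; have := H_dec S; rewrite /Ht trS addr0 /psi.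
by case: (S == _) => ->; rewrite ?expr1n ?expr0n subrr.
Qed.

Lemma main_conv S : fix_prob WR WM r S = H S.
Proof.
have [g0 [g0p [g01 Hg]]] := min_pos xv_gt0.
have [m [mp [m1 Hm]]] := min_pos psi_gt0.
set q := 1 - g0.
have q0 : 0 <= q by rewrite subr_ge0.
have q1 : `|q| < 1 by rewrite ger0_norm // /q; lra.
have dec1 : forall T, Ef psi T <= q * psi T.
  move=> T; rewrite Ef_psi.
  case trT: (tr T).
    have h1 := Hg T trT.
    have h2 : g0 * psi T <= g0.
      by rewrite -[leRHS]mulr1 ler_wpM2l ?psi_le1 // ltW.
    rewrite /q; lra.
  rewrite psi_ntr ?trT // mulr0 sub0r oppr_le0; exact: xv_ge0.
have dec : forall k T, iterE k psi T <= q ^+ k * psi T.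
  elim => [|k IH] T; first by rewrite /= expr0 mul1r.
  change (Ef (iterE k psi) T <= q ^+ k.+1 * psi T).
  apply: (le_trans (@Ef_mono (iterE k psi) (fun T => q ^+ k * psi T) T IH)).
  rewrite Ef_scale exprSr -mulrA; apply: ler_wpM2l; last exact: dec1.
  exact: exprn_ge0.
have Hk : forall k, fix_by WR WM r k S = H S - iterE k Ht S.
  move=> k; rewrite fix_iter.
  have E := iterE_fix k S Ef_H.
  rewrite {1}(funext H_dec) iterE_add in E.
  by rewrite -E addrK.
have lo : forall k, 0 <= iterE k Ht S.
  move=> k; have Z := iterE_fix k S (f := fun _ => 0) (fun T => Ef_cst 0 T).
  rewrite -Z; apply: iterE_mono => T; rewrite /Ht; case: ifP => _ //.
  exact: H_ge0.
have hi : forall k, iterE k Ht S <= (m^-1 * psi S) * q ^+ k.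
  move=> k; apply: (le_trans (@iterE_mono k Ht (fun T => m^-1 * psi T) S _)).
    move=> T; rewrite /Ht; case trT: (tr T).
      rewrite ler_pdivlMl //; apply: le_trans (Hm T trT).
      by rewrite -[leRHS]mulr1 ler_wpM2l ?H_le1 // ltW.
    by apply: mulr_ge0; [rewrite invr_ge0 ltW | exact: psi_ge0].
  rewrite iterE_scale -mulrA [psi S * _]mulrC; apply: ler_wpM2l; last exact: dec.
  by rewrite invr_ge0 ltW.
have Hc : (fix_by WR WM r k S @[k --> \oo] --> (H S : R))%classic.
have C : (H S - m^-1 * psi S * q ^+ k @[k --> \oo] --> (H S - m^-1 * psi S * 0 : R))%classic.
  apply: cvgB; first exact: cvg_cst.
  apply: cvgMr; exact: cvg_expr.
rewrite mulr0 subr0 in C.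
apply: (squeeze_cvgr _ C (cvg_cst (H S))).
apply: nearW => k; rewrite Hk; apply/andP; split.
  have := hi k; lra.
have := lo k; lra.
rewrite /fix_prob; exact: (cvg_lim (@Rhausdorff R) Hc).
Qed.

Lemma final : fixation_probability WR WM r = moran_fixation n r.
Proof.
rewrite /fixation_probability (eq_bigr (fun _ => hh 1)); last first.
  by move=> u _; rewrite main_conv /H cards1.
have nz : n%:R != 0 :> R by rewrite pnatr_eq0 -lt0n.
rewrite sumr_const card_ord -[hh 1 *+ n]mulr_natl mulrA mulVf // mul1r.
rewrite /hh big_nat1 expr0 /moran_fixation.
case: eqP => [r1|r1].
  rewrite /D r1 invr1 (eq_bigr (fun _ => 1)); last by move=> m _; rewrite expr1n.
  by rewrite sumr_const_nat subn0 div1r.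
have Dd : 1 - (r ^+ n)^-1 = (1 - r^-1) * D.
  rewrite /D big_mkord -exprVn -opprB subrX1 -mulNr opprB //.
have nz1 : 1 - r^-1 != 0.
  by rewrite subr_eq0 eq_sym invr_eq1; apply/eqP.
rewrite Dd invfM mulrA mulfV // !mul1r.
Qed.
End Main.

Theorem theorem2 (R : realType) (n : nat) (WR WM : 'M[R]_n) :
  (0 < n)%N ->
  row_stochastic WR -> row_stochastic WM ->
  strongly_connected WR -> strongly_connected WM ->
  (forall i : 'I_n, \sum_(j | j != i) WR j i = 1) ->
  (forall i : 'I_n, \sum_(j | j != i) WM j i = 1) ->
  (forall i j : 'I_n, WR i j + WR j i = WM i j + WM j i) ->
  forall r : R, 0 < r ->
  fixation_probability WR WM r = moran_fixation n r.
Proof.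
move=> n0 sR sM _ HSC cR cM Hsym r r0.
have WRcol := col_sum sR cR.
have WMcol := col_sum sM cM.
case: sR => WRge0 WRrow; case: sM => WMge0 WMrow.
exact: (final n0 r0 WRge0 WMge0 WRrow WMrow WRcol WMcol Hsym HSC).
Qed.
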